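(* Assume GCH. Let $\lambda<\kappa$ be infinite cardinals with $\mathrm{cf}(\kappa)=\omega$. Then every $(\lambda,\kappa)$-graph contains an $(\aleph_0,\kappa)$-subgraph.
   Context: For infinite cardinals $\lambda<\kappa$, a $(\lambda,\kappa)$-graph is a bipartite graph with bipartition $(A,B)$, $|A|=\lambda$, $|B|=\kappa$, in which every vertex $b\in B$ has infinitely many neighbours in $A$. An $(\aleph_0,\kappa)$-subgraph of such a graph is a subgraph with bipartition $(C,D)$, $C\subseteq A$, $D\subseteq B$, which is itself an $(\aleph_0,\kappa)$-graph. *)

(* Defs.v *)
From HB Require Import structures.
From mathcomp Require Import all_boot all_order.
From mathcomp Require Import boolp classical_sets functions cardinality.

Set Implicit Arguments.
Unset Strict Implicit.
Unset Printing Implicit Defensive.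

Local Open Scope classical_set_scope.
Local Open Scope card_scope.

Definition card_lt T U (A : set T) (B : set U) := A #<= B /\ ~ (B #<= A).

(* GCH at the cardinal |X| (X infinite): every cardinal mu with
   |X| <= mu <= 2^|X| (every such mu is the cardinality of a family
   S of subsets of X) equals |X| or 2^|X|. *)
Definition GCH_at (X : Type) : Prop :=
  infinite_set [set: X] ->
  forall S : set (set X), [set: X] #<= S ->
    S #= [set: X] \/ S #= [set: set X].

Definition strict_well_order T (R : T -> T -> Prop) : Prop :=
  [/\ forall x, ~ R x x,
      forall x y z, R x y -> R y z -> R x z,
      forall x y, [\/ R x y, x = y | R y x] &
      well_founded R].

(* cf(|B|) = omega: B is well-ordered in order type |B| (an initial ordinal:
   every proper initial segment has cardinality < |B|), and there is an
   omega-sequence cofinal in this order (every element lies strictly below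
   some term, so there is no finite cofinal subset). *)
Definition cof_omega (B : Type) : Prop :=
  exists R : B -> B -> Prop,
    [/\ strict_well_order R,
        forall b, card_lt [set x | R x b] [set: B] &
        exists s : nat -> B, forall x, exists n, R x (s n)].

(* (lambda,kappa)-graph on bipartition (A,B): every b in B has infinitely
   many neighbours in A (cardinality conditions stated in the theorem). *)
Definition bip_inf_nbrs (A B : Type) (E : A -> B -> Prop) : Prop :=
  forall b : B, infinite_set [set a | E a b].

Definition has_aleph0_kappa_subgraph (A B : Type) (E : A -> B -> Prop) : Prop :=
  exists (C : set A) (D : set B),
    [/\ C #= [set: nat], D #= [set: B] &
        forall d, D d -> infinite_set (C `&` [set a | E a d])].

(* Main.v *)
Require Import Defs.
From HB Require Import structures.
From mathcomp Require Import all_boot all_order.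
From mathcomp Require Import boolp classical_sets functions cardinality.
Set Implicit Arguments.
Unset Strict Implicit.
Unset Printing Implicit Defensive.
Local Open Scope classical_set_scope.
Local Open Scope card_scope.

Lemma cle_of T U (A : set T) (B : set U) (f : T -> U) :
  (forall x, A x -> B (f x)) -> (forall x y, A x -> A y -> f x = f y -> x = y) -> A #<= B.
Proof.
move=> fAB finj.
have : $|{injfun A >-> B}|.
  apply/injfunPex; exists f; first by move=> x; apply: fAB.
  by move=> x y; rewrite !inE; apply: finj.
by case=> g; apply: inj_card_le.
Qed.

Lemma cle_ex T U (A : set T) (B : set U) : A #<= B -> A !=set0 ->
  exists f : T -> U, (forall x, A x -> B (f x)) /\ (forall x y, A x -> A y -> f x = f y -> x = y).
Proof.
elim/Ppointed: U B => U B.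
  by rewrite (empty_eq0 B) => /card_le0P -> [x].
move=> /pcard_leP [g] _.
exists g; split; first by move=> x Ax; apply: funS.
by move=> x y Ax Ay; apply: inj; rewrite inE.
Qed.

Lemma graph_le T U (A : set T) (B : set U) (G : set (T * U)) :
  (forall x y, A x -> G (x, y) -> B y) ->
  (forall x, A x -> exists y, G (x, y)) ->
  (forall x x' y, A x -> A x' -> G (x, y) -> G (x', y) -> x = x') -> A #<= B.
Proof.
move=> GB Gtot Ginj.
have [->|/set0P[a0 Aa0]] := eqVneq A set0; first exact: card_ge0.
have [y0 _] := Gtot a0 Aa0.
pose f x := match pselect (exists y, G (x, y)) with
  | left H => proj1_sig (cid H) | right _ => y0 end.
have fG x : A x -> G (x, f x).
  move=> Ax; rewrite /f; case: pselect => [H|H]; first exact: (proj2_sig (cid H)).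
  by exfalso; apply: H; apply: Gtot.
apply: (@cle_of _ _ _ _ f).
  by move=> x Ax; apply: (GB x) => //; apply: fG.
move=> x y Ax Ay fxy; apply: (Ginj x y (f x)) => //; first exact: fG.
by rewrite fxy; apply: fG.
Qed.

Lemma card_le_total T U (A : set T) (B : set U) : A #<= B \/ B #<= A.
Proof.
pose P (G : set (T * U)) := [/\ forall p, G p -> A p.1 /\ B p.2,
  forall x y y', G (x, y) -> G (x, y') -> y = y' &
  forall x x' y, G (x, y) -> G (x', y) -> x = x'].
have [G [[GAB Gfun Ginj] Gmax]] : exists G, P G /\ forall G', G `<` G' -> ~ P G'.
  apply: Zorn_bigcup => F FP Ftot; split.
  - by move=> p [G FG Gp]; have [] := FP G FG; move=> H _ _; apply: H.
  - move=> x y y' [G1 F1 G1y] [G2 F2 G2y].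
    have [S12|S21] := Ftot _ _ F1 F2.
      by have [_ H _] := FP _ F2; apply: (H x); [apply: S12|].
    by have [_ H _] := FP _ F1; apply: (H x); [|apply: S21].
  - move=> x x' y [G1 F1 G1y] [G2 F2 G2y].
    have [S12|S21] := Ftot _ _ F1 F2.
      by have [_ _ H] := FP _ F2; apply: (H _ _ y); [apply: S12|].
    by have [_ _ H] := FP _ F1; apply: (H _ _ y); [|apply: S21].
have [H1|H1] := pselect (forall x, A x -> exists y, G (x, y)).
  left; apply: (graph_le (G := G)) => //.
  - by move=> x y _ /GAB [].
  - by move=> x x' y _ _; apply: Ginj.
have [H2|H2] := pselect (forall y, B y -> exists x, G (x, y)).
  right; apply: (@graph_le _ _ B A [set p | G (p.2, p.1)]).
  - by move=> y x _ /GAB [].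
  - by move=> y By; have [x Gx] := H2 y By; exists x.
  - by move=> y y' x _ _ /= G1 G2; apply: (Gfun x).
exfalso.
move/existsNP: H1 => [a /not_implyP [Aa Na]].
move/existsNP: H2 => [b /not_implyP [Bb Nb]].
apply: (Gmax (G `|` [set (a, b)])).
  split; first by move=> p Gp; left.
  move=> /(_ (a, b)) H; apply: Na; exists b; apply: H; by right.
split.
- by move=> p [/GAB//|->].
- move=> x y y' [G1|/pair_equal_spec[? ?]] [G2|/pair_equal_spec[? ?]]; subst => //.
  + exact: Gfun G1 G2.
  + by exfalso; apply: Na; exists y.
  + by exfalso; apply: Na; exists y'.
- move=> x x' y [G1|/pair_equal_spec[? ?]] [G2|/pair_equal_spec[? ?]]; subst => //.
  + exact: Ginj G1 G2.
  + by exfalso; apply: Nb; exists x.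
  + by exfalso; apply: Nb; exists x'.
Qed.

Lemma graph_fun A C (c0 : C) (D : set A) (G : set (A * C)) :
  (forall p, D p -> exists z, G (p, z)) -> exists g : A -> C, forall p, D p -> G (p, g p).
Proof.
move=> H.
exists (fun p => match pselect (exists z, G (p, z)) with
  | left H => proj1_sig (cid H) | right _ => c0 end).
move=> p Dp; case: pselect => [H'|H']; first exact: (proj2_sig (cid H')).
by exfalso; apply: H'; apply: H.
Qed.

Lemma cle_prod T T' U U' (A : set T) (A' : set T') (B : set U) (B' : set U') :
  A #<= A' -> B #<= B' -> A `*` B #<= A' `*` B'.
Proof.
move=> AA BB.
have [->|/set0P[a Aa]] := eqVneq A set0; first by rewrite set0X; exact: card_ge0.
have [->|/set0P[b Bb]] := eqVneq B set0; first by rewrite setX0; exact: card_ge0.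
have [f [f1 f2]] := cle_ex AA (ex_intro _ a Aa).
have [g [g1 g2]] := cle_ex BB (ex_intro _ b Bb).
apply: (@cle_of _ _ _ _ (fun p => (f p.1, g p.2))).
  by move=> [x y] [/= Ax By]; split; [apply: f1|apply: g1].
move=> [x y] [x' y'] [/= Ax By] [/= Ax' By'] /pair_equal_spec [E1 E2].
by rewrite (f2 _ _ Ax Ax' E1) (g2 _ _ By By' E2).
Qed.

Lemma cle_subset T U (A A' : set T) (B : set U) : A `<=` A' -> A' #<= B -> A #<= B.
Proof. by move=> S; apply: card_le_trans; apply: subset_card_le. Qed.

Definition Ydom T (G : set ((T * T) * T)) := [set x | exists z, G ((x, x), z)].

Record sq_good T (X : set T) (G0 G : set ((T * T) * T)) : Prop := SqGood {
  sq_G0 : G0 `<=` G;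
  sq_X : Ydom G `<=` X;
  sq_cl : forall x y z, G ((x, y), z) -> [/\ Ydom G x, Ydom G y & Ydom G z];
  sq_tot : forall x y, Ydom G x -> Ydom G y -> exists z, G ((x, y), z);
  sq_fun : forall p z z', G (p, z) -> G (p, z') -> z = z';
  sq_inj : forall p p' z, G (p, z) -> G (p', z) -> p = p' }.

Lemma Ydom_mono T (G G' : set ((T * T) * T)) : G `<=` G' -> Ydom G `<=` Ydom G'.
Proof. by move=> S x [z Gz]; exists z; apply: S. Qed.

Lemma sq_chain T (X : set T) (G0 : set ((T * T) * T)) (F : set (set ((T * T) * T))) :
  F `<=` (fun G => G = set0 \/ sq_good X G0 G) -> total_on F subset ->
  (\bigcup_(G in F) G) = set0 \/ sq_good X G0 (\bigcup_(G in F) G).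
Proof.
move=> FP Ftot.
have memgood G q : F G -> G q -> sq_good X G0 G.
  by move=> FG Gq; case: (FP G FG) => // E; rewrite E in Gq.
have [E|NE] := pselect ((\bigcup_(G in F) G) = set0); first by left.
move/eqP: NE => /set0P [q [G1 FG1 G1q]].
right; set U := \bigcup_(G in F) G.
have YU x : Ydom U x -> exists G, [/\ F G, sq_good X G0 G & Ydom G x].
  by move=> [z [G FG Gz]]; exists G; split => //; [apply: memgood FG Gz|exists z].
have big G G' : F G -> F G' -> exists G'', [/\ F G'', G `<=` G'' & G' `<=` G''].
  move=> FG FG'; have [S|S] := Ftot _ _ FG FG'; first by exists G'; split.
  by exists G; split.
have Usub G : F G -> G `<=` U by move=> FG r Gr; exists G.
split.
- by move=> p G0p; exists G1 => //; apply: (sq_G0 (memgood _ _ FG1 G1q)).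
- by move=> x /YU [G [_ gG Yx]]; apply: (sq_X gG).
- move=> x y z [G FG Gz]; have gG := memgood _ _ FG Gz.
  have [a b c] := sq_cl gG Gz.
  by split; apply: (Ydom_mono (Usub _ FG)).
- move=> x y /YU [G [FG gG Yx]] /YU [G' [FG' gG' Yy]].
  have [G'' [FG'' S1 S2]] := big _ _ FG FG'.
  have Yx'' := Ydom_mono S1 Yx; have Yy'' := Ydom_mono S2 Yy.
  have [z0 G''z] := Yx''.
  have gG'' := memgood _ _ FG'' G''z.
  have [z Gz] := sq_tot gG'' Yx'' Yy''.
  by exists z; apply: (Usub _ FG'').
- move=> p z z' [G FG Gz] [G' FG' Gz'].
  have [G'' [FG'' S1 S2]] := big _ _ FG FG'.
  have gG'' := memgood _ _ FG'' (S1 _ Gz).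
  exact: (sq_fun gG'' (S1 _ Gz) (S2 _ Gz')).
- move=> p p' z [G FG Gz] [G' FG' Gz'].
  have [G'' [FG'' S1 S2]] := big _ _ FG FG'.
  have gG'' := memgood _ _ FG'' (S1 _ Gz).
  exact: (sq_inj gG'' (S1 _ Gz) (S2 _ Gz')).
Qed.

Definition G0of T (e : nat -> T) (c : nat * nat -> nat) : set ((T * T) * T) :=
  [set q | exists i j, q = ((e i, e j), e (c (i, j)))].

Lemma G0_good T (X : set T) (e : nat -> T) (c : nat * nat -> nat) :
  (forall i, X (e i)) -> injective e -> injective c ->
  sq_good X (G0of e c) (G0of e c).
Proof.
move=> eX einj cinj.
have YG x : Ydom (G0of e c) x <-> exists i, x = e i.
  split; first by move=> [z [i [j /pair_equal_spec [/pair_equal_spec [-> _] _]]]]; exists i.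
  by move=> [i ->]; exists (e (c (i, i))); exists i, i.
split => //.
- by move=> x /YG [i ->].
- move=> x y z [i [j /pair_equal_spec [/pair_equal_spec [-> ->] ->]]].
  by split; apply/YG; [exists i|exists j|exists (c (i, j))].
- move=> x y /YG [i ->] /YG [j ->]; exists (e (c (i, j))); by exists i, j.
- move=> p z z' [i [j /pair_equal_spec [-> ->]]] [i' [j' /pair_equal_spec [E ->]]].
  move/pair_equal_spec: E => [/einj <- /einj <-]; done.
- move=> p p' z [i [j /pair_equal_spec [-> ->]]] [i' [j' /pair_equal_spec [-> E]]].
  by move/einj/cinj: E => /pair_equal_spec [-> ->].
Qed.

Lemma sq_extend T (X : set T) G0 G (t1 t2 t3 : T) :
  sq_good X G0 G -> Ydom G t1 -> Ydom G t2 -> Ydom G t3 ->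
  t1 <> t2 -> t1 <> t3 -> t2 <> t3 ->
  Ydom G #<= X `\` Ydom G ->
  exists G', G `<` G' /\ sq_good X G0 G'.
Proof.
move=> gd Y1 Y2 Y3 n12 n13 n23 HYX.
set Y := Ydom G in Y1 Y2 Y3 HYX.
have [h [hS hinj]] := cle_ex HYX (ex_intro _ t1 Y1).
have [g gG] := @graph_fun _ _ t1 (Y `*` Y) G
  (fun p => match p with (a, b) => fun (Hp : (Y `*` Y) (a, b)) => sq_tot gd Hp.1 Hp.2 end).
have gY a b : Y a -> Y b -> Y (g (a, b)).
  by move=> Ya Yb; have [] := sq_cl gd (gG (a, b) (conj Ya Yb)).
have ginj a b a' b' : Y a -> Y b -> Y a' -> Y b' -> g (a, b) = g (a', b') ->
    a = a' /\ b = b'.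
  move=> Ya Yb Ya' Yb' E.
  have G1 := gG (a, b) (conj Ya Yb); have G2 := gG (a', b') (conj Ya' Yb').
  rewrite E in G1; have := sq_inj gd G1 G2; by move/pair_equal_spec.
set Z := h @` Y.
have ZnY z : Z z -> X z /\ ~ Y z by move=> [y Yy <-]; apply: hS.
pose hinv z := match pselect (exists y, Y y /\ h y = z) with
  | left H => proj1_sig (cid H) | right _ => t1 end.
have hinvP z : Z z -> Y (hinv z) /\ h (hinv z) = z.
  move=> [y Yy <-]; rewrite /hinv; case: pselect => [H|H].
    exact: (proj2_sig (cid H)).
  by exfalso; apply: H; exists y.
pose r a := match pselect (Y a) with left _ => a | right _ => hinv a end.
have rY a : Y a -> r a = a by rewrite /r; case: pselect.
have rN a : ~ Y a -> r a = hinv a by rewrite /r; case: pselect.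
set W := Y `|` Z.
have rW a : W a -> Y (r a).
  case=> [Ya|Za]; first by rewrite rY.
  by rewrite rN; [apply: (hinvP _ Za).1|apply: (ZnY _ Za).2].
pose tg a b := match pselect (Y a) with left _ => t1 | right _ =>
  match pselect (Y b) with left _ => t2 | right _ => t3 end end.
have tgY a b : Y (tg a b) by rewrite /tg; case: pselect => //; case: pselect.
pose k (q : T * T) := h (g (g (r q.1, r q.2), tg q.1 q.2)).
have kZ a b : W a -> W b -> Z (k (a, b)).
  move=> Wa Wb; exists (g (g (r a, r b), tg a b)) => //.
  by apply: (gY) => //; apply: (gY); apply: (rW).
pose S := [set w : (T * T) * T | [/\ W w.1.1, W w.1.2, ~ (Y w.1.1 /\ Y w.1.2) & w.2 = k w.1]].
have GY x y z : G ((x, y), z) -> [/\ Y x, Y y & Y z] by apply: (sq_cl gd).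
have YX : Y `<=` X by apply: (sq_X gd).
have YdG' : Ydom (G `|` S) = W.
  apply/seteqP; split.
    by move=> x [z [/(GY) [Yx _ _]|[Wx _ _ _]]]; [left|].
  move=> x Wx; have [Yx|nYx] := pselect (Y x).
    by have [z Gz] := Yx; exists z; left.
  by exists (k (x, x)); right; split => // -[].
exists (G `|` S); split.
  split; first by move=> q Gq; left.
  have [y0 _] := Y1.
  move=> E.
  have Zh : Z (h t1) by exists t1.
  have : (G `|` S) ((h t1, h t1), k (h t1, h t1)).
    right; split => //=; [by right|by right|by case=> /(ZnY _ Zh).2].
  by move/E => /(GY) [/(ZnY _ Zh).2].
split.
- by move=> q G0q; left; apply: (sq_G0 gd).
- rewrite YdG' => x [/(YX)//|/(ZnY) []//].
- rewrite YdG' => x y z [/(GY) [Yx Yy Yz]|[/= Wx Wy _ ->]].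
    by split; left.
  by split => //; right; apply: (kZ).
- rewrite YdG' => x y Wx Wy.
  have [[Yx Yy]|N] := pselect (Y x /\ Y y).
    by have [z Gz] := sq_tot gd Yx Yy; exists z; left.
  by exists (k (x, y)); right.
- move=> [x y] z z' [Gz|[/= Wx Wy N ->]] [Gz'|[/= Wx' Wy' N' ->]] //.
  + exact: (sq_fun gd Gz Gz').
  + by have [Yx Yy _] := GY _ _ _ Gz; exfalso; apply: N'.
  + by have [Yx Yy _] := GY _ _ _ Gz'; exfalso; apply: N.
- move=> [x y] [x' y'] z [Gz|[/= Wx Wy N Ez]] [Gz'|[/= Wx' Wy' N' Ez']].
  + exact: (sq_inj gd Gz Gz').
  + have [_ _ Yz] := GY _ _ _ Gz; exfalso.
    by have := (ZnY _ (kZ _ _ Wx' Wy')).2; rewrite -Ez'.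
  + have [_ _ Yz] := GY _ _ _ Gz'; exfalso.
    by have := (ZnY _ (kZ _ _ Wx Wy)).2; rewrite -Ez.
  + have E : k (x, y) = k (x', y') by rewrite -Ez -Ez'.
    move: E; rewrite /k /= => /(hinj) E.
    have := E (gY _ _ (gY _ _ (rW _ Wx) (rW _ Wy)) (tgY _ _))
              (gY _ _ (gY _ _ (rW _ Wx') (rW _ Wy')) (tgY _ _)).
    move=> /(ginj) [] //; try (by apply: (gY); apply: (rW)); try exact: tgY.
    move=> /(ginj) [] //; try exact: rW.
    move=> Ex Ey Et.
    have sameY a a' : W a -> W a' -> (Y a <-> Y a') -> r a = r a' -> a = a'.
      move=> Wa Wa' [I1 I2] Er.
      have [Ya|nYa] := pselect (Y a).
        by rewrite -(rY _ Ya) Er rY //; apply: I1.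
      have nYa' : ~ Y a' by move=> /I2.
      case: Wa => // Za; case: Wa' => // Za'.
      rewrite (rN _ nYa) (rN _ nYa') in Er.
      by rewrite -(hinvP _ Za).2 -(hinvP _ Za').2 Er.
    move: Et; rewrite /tg.
    case: (pselect (Y x)) => Yx; case: (pselect (Y x')) => Yx'.
    * move=> _.
      have nYy : ~ Y y by move=> Yy; apply: N.
      have nYy' : ~ Y y' by move=> Yy'; apply: N'.
      by congr (_, _); [apply: (sameY)|apply: (sameY)].
    * by case: pselect => _ E'; exfalso; [apply: n12|apply: n13].
    * by case: pselect => _ E'; exfalso; [apply: n12|apply: n13].
    * case: (pselect (Y y)) => Yy; case: (pselect (Y y')) => Yy' E'.
      - by congr (_, _); apply: (sameY).
      - by exfalso; apply: n23.
      - by exfalso; apply: n23.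
      - by congr (_, _); apply: (sameY).
Qed.

Lemma sq_le T (X : set T) G0 G : sq_good X G0 G -> Ydom G `*` Ydom G #<= Ydom G.
Proof.
move=> gd; apply: (@graph_le _ _ _ _ G).
- by move=> [x y] z _ /(sq_cl gd) [].
- by move=> [x y] [Yx Yy]; apply: (sq_tot gd).
- by move=> p p' z _ _; apply: (sq_inj gd).
Qed.

Lemma hessenberg T (X : set T) : infinite_set X -> X `*` X #<= X.
Proof.
move=> /infiniteP NX.
have [e [eX einj]] := cle_ex NX (ex_intro _ 0%N I).
have [c [_ cinj]] := cle_ex ((card_eqPle _ _).1 card_nat2).1 (ex_intro _ (0%N, 0%N) I).
have einj' : injective e by move=> i j; apply: einj.
have cinj' : injective c by move=> i j; apply: cinj.
have eX' i : X (e i) by apply: eX.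
set G0 := G0of e c.
have G0g := G0_good eX' einj' cinj'.
have [G [PG Gmax]] := @Zorn_bigcup _ (fun G => G = set0 \/ sq_good X G0 G)
  (fun F FP Ftot => sq_chain FP Ftot).
have gd : sq_good X G0 G.
  case: PG => // E; exfalso; apply: (Gmax G0); last by right.
  rewrite E; split; first by [].
  move=> /(_ ((e 0%N, e 0%N), e (c (0%N, 0%N)))) H.
  by apply: H; exists 0%N, 0%N.
set Y := Ydom G.
have Ye i : Y (e i) by exists (e (c (i, i))); apply: (sq_G0 gd); exists i, i.
have YX : Y `<=` X by apply: (sq_X gd).
have n01 : e 0%N <> e 1%N by move/einj'.
have n02 : e 0%N <> e 2%N by move/einj'.
have n12 : e 1%N <> e 2%N by move/einj'.
have [HYX|HXY] := card_le_total Y (X `\` Y).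
  have [G' [GG' gd']] := sq_extend gd (Ye 0%N) (Ye 1%N) (Ye 2%N)
    n01 n02 n12 HYX.
  by exfalso; apply: (Gmax G' GG'); right.
have [h [hS hinj]] : exists h : T -> T, (forall x, (X `\` Y) x -> Y (h x)) /\
    (forall x y, (X `\` Y) x -> (X `\` Y) y -> h x = h y -> x = y).
  have [E|/set0P ne] := eqVneq (X `\` Y) set0.
    by exists id; rewrite E; split.
  have [h [hS hinj]] := cle_ex HXY ne; by exists h.
have XYY : X #<= Y `*` Y.
  apply: (@cle_of _ _ _ _ (fun x => match pselect (Y x) with
     left _ => (x, e 0%N) | right _ => (h x, e 1%N) end)).
    move=> x Xx; case: pselect => Yx; split => //=.
    by apply: hS.
  move=> x y Xx Xy; case: pselect => Yx; case: pselect => Yy; move/pair_equal_spec => [E1 E2];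
    first [exact E1 | by move/n01: E2 | by move/esym/n01: E2 | by apply: (hinj x y) => //; split].
have XY : X #<= Y := card_le_trans XYY (sq_le gd).
apply: card_le_trans (cle_prod XY XY) _.
apply: card_le_trans (sq_le gd) _.
exact: subset_card_le.
Qed.

Lemma fam_inj I T U (K : I -> set T) (D : set U) (d0 : U) :
  (forall i, K i #<= D) ->
  exists F : I -> T -> U, forall i, (forall x, K i x -> D (F i x)) /\
     (forall x y, K i x -> K i y -> F i x = F i y -> x = y).
Proof.
move=> KD.
suff H : forall i, exists f : T -> U, (forall x, K i x -> D (f x)) /\
     (forall x y, K i x -> K i y -> f x = f y -> x = y).
  by have [F HF] := choice H; exists F.
move=> i; have [E|/set0P ne] := eqVneq (K i) set0.
  by exists (fun _ => d0); rewrite E; split.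
exact: cle_ex (KD i) ne.
Qed.

Lemma Lunion T U (X : set T) (K : nat -> set T) (D : set U) :
  infinite_set D -> (forall x, X x -> exists n, K n x) ->
  (forall n, K n #<= D) -> X #<= D.
Proof.
move=> Dinf XK KD.
have [d0 _] := infinite_setN0 Dinf.
have [F HF] := fam_inj d0 KD.
pose nn x := match pselect (exists n, K n x) with
  | left H => proj1_sig (cid H) | right _ => 0%N end.
have nnP x : X x -> K (nn x) x.
  move=> Xx; rewrite /nn; case: pselect => [H|H]; first exact: (proj2_sig (cid H)).
  by exfalso; apply: H; apply: XK.
have XND : X #<= [set: nat] `*` D.
  apply: (@cle_of _ _ _ _ (fun x => (nn x, F (nn x) x))).
    by move=> x Xx; split => //=; apply: (HF _).1; apply: nnP.
  move=> x y Xx Xy /pair_equal_spec [E1 E2].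
  apply: (HF (nn x)).2 => //; first exact: (nnP).
    by rewrite E1; apply: (nnP).
  by rewrite {2}E1.
apply: card_le_trans XND _.
apply: card_le_trans (hessenberg Dinf).
apply: cle_prod; last exact: card_lexx.
by apply/infiniteP.
Qed.

Lemma Lsum T W V (A : set T) (f : T -> W) (M : set V) :
  (forall w, [set x | A x /\ f x = w] #<= M) -> A #<= [set: W] `*` M.
Proof.
move=> HM.
have [->|/set0P [a Aa]] := eqVneq A set0; first exact: card_ge0.
have [g [g1 _]] := cle_ex (HM (f a)) (ex_intro _ a (conj Aa erefl)).
have [F HF] := fam_inj (g a) HM.
apply: (@cle_of _ _ _ _ (fun x => (f x, F (f x) x))).
  by move=> x Ax; split => //=; apply: (HF _).1.
move=> x y Ax Ay /pair_equal_spec [E1 E2].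
apply: (HF (f x)).2; first by split.
  by split; rewrite // E1.
by rewrite {2}E1.
Qed.

Theorem corollary4p7
  (gch : forall X : Type, GCH_at X)
  (A B : Type)
  (hA : infinite_set [set: A])
  (hAB : card_lt [set: A] [set: B])
  (hcf : cof_omega B)
  (E : A -> B -> Prop)
  (hE : bip_inf_nbrs E) :
  has_aleph0_kappa_subgraph E.
Proof.
case: hAB => AleB nBleA.
case: hcf => R [_ Rlt [s Rs]].
pose Iseg n := [set x | R x (s n)].
have Ilt n : ~ ([set: B] #<= Iseg n) by case: (Rlt (s n)).
have Bcov : forall x, [set: B] x -> exists n, Iseg n x by move=> x _; apply: Rs.
have [a0 _] := infinite_setN0 hA.
have NA : [set: nat] #<= [set: A] by apply/infiniteP.
have K : ~ ([set: B] #<= [set: set A]).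
  move=> HB.
  have [b0 _] : exists b : B, True.
    have [f [f1 _]] := cle_ex AleB (ex_intro _ a0 I); by exists (f a0).
  have [phi [_ phiinj]] := cle_ex HB (ex_intro _ b0 I).
  have phiinj' : {in [set: B] &, injective phi}.
    by move=> x y _ _; apply: phiinj.
  set S := phi @` [set: B].
  have SB : S #= [set: B] := inj_card_eq phiinj'.
  have [SB1 SB2] := (card_eqPle _ _).1 SB.
  have AS : [set: A] #<= S := card_le_trans AleB SB2.
  case: (gch A hA S AS) => /card_eqPle [SA1 SA2].
    by apply: nBleA; apply: card_le_trans SB2 SA1.
  apply: nBleA; apply: (Lunion hA Bcov) => n.
  set Tn := phi @` Iseg n.
  have [TI1 TI2] := (card_eqPle _ _).1
    (inj_card_eq (fun x y (_ : x \in Iseg n) (_ : y \in Iseg n) => phiinj x y I I)).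
  have [AT|TA] := card_le_total [set: A] (phi @` Iseg n).
    case: (gch A hA _ AT) => /card_eqPle [TA1 TA2].
      exact: card_le_trans TI2 TA1.
    exfalso; apply: (Ilt n).
    apply: card_le_trans SB2 _; apply: card_le_trans SA1 _.
    exact: card_le_trans TA2 TI1.
  exact: card_le_trans TI2 TA.
have PAinf : infinite_set [set: set A].
  apply/infiniteP; apply: card_le_trans NA _.
  apply: (@cle_of _ _ _ _ (fun a => [set a])) => // x y _ _ Exy.
  by have : [set x] x by []; rewrite Exy.
have [N HN] : {N : B -> set A & forall b, N b `<=` [set a | E a b] /\ N b #= [set: nat]}.
  apply: (@choice B (set A) (fun b v => v `<=` [set a | E a b] /\ v #= [set: nat])) => b.
  have /infiniteP Nb := hE b.
  have [e [e1 e2]] := cle_ex Nb (ex_intro _ 0%N I).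
  exists (e @` [set: nat]); split; first by move=> _ [i _ <-]; apply: e1.
  by apply: inj_card_eq => i j _ _; apply: e2.
have fib n : exists v, (exists b, N b = v) /\ Iseg n #<= [set b | N b = v].
  apply: contrapT => H.
  have Hv v : [set x | [set: B] x /\ N x = v] #<= Iseg n.
    have [[b Nb]|nb] := pselect (exists b, N b = v).
      have [//|] := card_le_total (Iseg n) [set b | N b = v].
        by move=> HI; exfalso; apply: H; exists v; split => //; exists b.
      by apply: cle_subset => x [_ Nx].
    suff -> : [set x | [set: B] x /\ N x = v] = set0 by apply: card_ge0.
    by apply/seteqP; split => // x [_ Nx]; exfalso; apply: nb; exists x.
  have BPI := Lsum Hv.
  have [PI|IP] := card_le_total [set: set A] (Iseg n).
    have Iinf : infinite_set (Iseg n) by move=> /(card_le_finite PI).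
    apply: (Ilt n); apply: card_le_trans BPI _.
    apply: card_le_trans (hessenberg Iinf).
    by apply: cle_prod => //; apply: card_lexx.
  apply: K; apply: card_le_trans BPI _.
  apply: card_le_trans (hessenberg PAinf).
  by apply: cle_prod => //; apply: card_lexx.
have [vn Hvn] := choice fib.
pose C := \bigcup_n vn n.
pose D := \bigcup_n [set b | N b = vn n].
have vcnt n : countable (vn n).
  have [[b <-] _] := Hvn n.
  by have /card_eqPle [H _] := (HN b).2.
exists C, D; split.
- apply: eq_card_nat.
    by apply: bigcup_countable => // n _; apply: vcnt.
  have [[b Nb] _] := Hvn 0%N.
  apply: (@sub_infinite_set _ (vn 0%N)); first by move=> x vx; exists 0%N.
  rewrite -Nb; apply/infiniteP.
  by have [_ /card_eqPle [_ H]] := HN b.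
- have Dinf : infinite_set D.
    move=> Dfin.
    have Bc : countable [set: B].
      have Icnt n : countable (Iseg n).
        apply: finite_set_countable.
        apply: (card_le_finite _ Dfin).
        apply: card_le_trans (Hvn n).2 _.
        by apply: subset_card_le => x Nx; exists n.
      apply: (@sub_countable _ _ _ (\bigcup_n Iseg n)).
        by apply: subset_card_le => x _; have [n Inx] := Rs x; exists n.
      by apply: bigcup_countable => // n _; apply: Icnt.
    by apply: nBleA; apply: card_le_trans Bc NA.
  apply/card_eqPle; split; first exact: card_leT.
  apply: (Lunion Dinf Bcov) => n.
  apply: card_le_trans (Hvn n).2 _.
  by apply: subset_card_le => x Nx; exists n.
- move=> d [n _ Nd].
  apply: (@sub_infinite_set _ (N d)).
    move=> a Na; split; first by exists n => //; rewrite -Nd.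
    exact: (HN d).1.
  by apply/infiniteP; have [_ /card_eqPle [_ H]] := HN d.
Qed.
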